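(* Let $R$ be an integral domain, $L_n=R[t_1^{\pm1},\dots,t_n^{\pm1}]=R[\mathbb{Z}^n]$, and $C_*$ a finite free chain complex over $L_n$. Let $k\ge0$ and $q>0$. Then there is a finite family of proper full subgroups $G_i\subset\mathrm{Hom}(\mathbb{Z}^n,\mathbb{Z})$ such that for every $m$ and every homomorphism $p\in\mathrm{Hom}(\mathbb{Z}^n,\mathbb{Z}^m)$ the condition $b_k(C_*,p)\ge b_k(C_* )+q$ is equivalent to: $p\sqsubset G_i$ for some $i$.
   Context: $b_k(C_* )$ is the dimension over the fraction field of $L_n$ of $H_k(C_*\otimes_{L_n}\{L_n\})$. A group homomorphism $p:\mathbb{Z}^n\to\mathbb{Z}^m$ extends to a ring homomorphism $p:L_n\to L_m=R[\mathbb{Z}^m]$; $\mathcal{Q}_m$ denotes the fraction field of $L_m$ and $b_k(C_*,p)=\dim_{\mathcal{Q}_m}H_k(C_*\otimes_p\mathcal{Q}_m)$. A subgroup of $\mathbb{Z}^n$ (or of $\mathrm{Hom}(\mathbb{Z}^n,\mathbb{Z})$) is full if it is a direct summand. For a full subgroup $G\subset\mathrm{Hom}(\mathbb{Z}^n,\mathbb{Z})$, write $p\sqsubset G$ if all coordinates $p_j\in\mathrm{Hom}(\mathbb{Z}^n,\mathbb{Z})$ of $p$ belong to $G$. *)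

(* Defs.v *)
From HB Require Import structures.
From mathcomp Require Import all_boot all_order all_algebra.
From mathcomp Require Import finmap.
From mathcomp Require Import mpoly.
From mathcomp Require Import fraction.
Set Implicit Arguments. Unset Strict Implicit. Unset Printing Implicit Defensive.
Import Order.TTheory GRing.Theory Num.Theory.
Local Open Scope ring_scope.

(* Z^n is modelled by row vectors 'rV[int]_n.  A homomorphism
   p : Z^n -> Z^m is a matrix P : 'M[int]_(n, m) acting by a |-> a *m P.
   Hom(Z^n, Z) is modelled by column vectors 'cV[int]_n (phi(a) = a *m phi);
   the coordinates p_j of p are the columns  col j P. *)

(* L_n = R[Z^n]: finitely supported functions Z^n -> R. *)
Definition laurent (R : idomainType) (n : nat) :=
  {fsfun 'rV[int]_n -> R with 0}.

(* A finite free chain complex over L_n, indexed by k >= 0: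
   C_i = L_n^(c i) (row vectors), d i : C_(i+1) -> C_i given by a matrix
   acting on rows.  The complex condition says that the matrix product
   d (i+1) * d i, computed in the group ring R[Z^n] (convolution), is zero. *)
Definition is_chain_complex (R : idomainType) (n : nat) (c : nat -> nat)
  (d : forall i, 'M[laurent R n]_(c i.+1, c i)) : Prop :=
  forall (i : nat) (x : 'I_(c i.+2)) (z : 'I_(c i)) (e : 'rV[int]_n),
    \sum_(j < c i.+1)
      \sum_(a <- finsupp (d i.+1 x j))
        \sum_(b <- finsupp (d i j z) | a + b == e)
          (d i.+1 x j a * d i j z b) = 0.

Definition finite_complex (c : nat -> nat) : Prop :=
  exists N, forall i, (N <= i)%N -> c i = 0%N.

(* Q_m = fraction field of L_m = fraction field of R[t_1,...,t_m]. *)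
Definition Qfield (R : idomainType) (m : nat) := {fraction {mpoly R[m]}}.

Definition Qt (R : idomainType) (m : nat) (i : 'I_m) : Qfield R m :=
  tofrac (mpolyX R (U_(i))%MM).

Definition Qconst (R : idomainType) (m : nat) (r : R) : Qfield R m :=
  tofrac (mpolyC m r).

Definition Qmono (R : idomainType) (m : nat) (a : 'rV[int]_m) : Qfield R m :=
  \prod_(i < m) Qt R i ^ (a 0 i).

Definition push (R : idomainType) (n m : nat) (P : 'M[int]_(n, m))
  (f : laurent R n) : Qfield R m :=
  \sum_(a <- finsupp f) Qconst m (f a) * Qmono R (a *m P).

(* dimension of ker A / im B for  C_(k+1) --B--> C_k --A--> C_(k-1)
   (row-vector convention): rank of a complement of im B in ker A. *)
Definition hdim (F : fieldType) (a b e : nat)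
  (A : 'M[F]_(a, b)) (B : 'M[F]_(e, a)) : nat :=
  \rank (kermx A :\: B)%MS.

(* b_k( C_*, p) = dim_{Q_m} H_k( C_* (x)_p Q_m) *)
Definition betti_p (R : idomainType) (n : nat) (c : nat -> nat)
  (d : forall i, 'M[laurent R n]_(c i.+1, c i)) (k m : nat)
  (P : 'M[int]_(n, m)) : nat :=
  let D i := map_mx (push P) (d i) in
  match k with
  | 0 => hdim (0 : 'M[Qfield R m]_(c 0, 0)) (D 0%N)
  | k'.+1 => hdim (D k') (D k'.+1)
  end.

(* b_k( C_* ) = dim over the fraction field of L_n of H_k( C_* (x) Frac L_n):
   the case p = identity. *)
Definition betti (R : idomainType) (n : nat) (c : nat -> nat)
  (d : forall i, 'M[laurent R n]_(c i.+1, c i)) (k : nat) : nat :=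
  betti_p d k (1%:M : 'M[int]_n).

Definition is_subgroup (n : nat) (G : 'cV[int]_n -> Prop) : Prop :=
  G 0 /\ (forall x y, G x -> G y -> G (x - y)).

(* full = direct summand *)
Definition is_full (n : nat) (G : 'cV[int]_n -> Prop) : Prop :=
  is_subgroup G /\
  exists H : 'cV[int]_n -> Prop, is_subgroup H /\
    (forall x, G x -> H x -> x = 0) /\
    (forall x, exists g h, G g /\ H h /\ x = g + h).

Definition is_proper (n : nat) (G : 'cV[int]_n -> Prop) : Prop :=
  exists x, ~ G x.

Definition sqsub (n m : nat) (P : 'M[int]_(n, m)) (G : 'cV[int]_n -> Prop)
  : Prop := forall j : 'I_m, G (col j P).

(* Main.v *)
Set Warnings "-notation-overridden,-ambiguous-paths,-notation-incompatible-prefix,-deprecated".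
Require Import Defs.
From HB Require Import structures.
From mathcomp Require Import all_boot all_order all_algebra.
From mathcomp Require Import finmap mpoly fraction.
From mathcomp Require Import perm ring zify.
From Stdlib Require Import Classical_Prop.
Set Implicit Arguments. Unset Strict Implicit. Unset Printing Implicit Defensive.
Import Order.TTheory GRing.Theory Num.Theory.
Local Open Scope ring_scope.
Section PartA.
Variable R : idomainType.

Lemma mpolyX_neq0 m (mm : 'X_{1..m}) : ('X_[mm] : {mpoly R[m]}) != 0.
Proof.
apply/eqP => h; have := (@mcoeffX m R mm mm).
by rewrite h mcoeff0 eqxx => /eqP; rewrite eq_sym oner_eq0.
Qed.

Lemma Qt_neq0 m (i : 'I_m) : Qt R i != 0.
Proof. by rewrite /Qt tofrac_eq0 mpolyX_neq0. Qed.

Lemma QmonoD m (a b : 'rV[int]_m) : Qmono R (a + b) = Qmono R a * Qmono R b.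
Proof.
rewrite /Qmono -big_split /=; apply: eq_bigr => i _.
by rewrite mxE expfzDr // Qt_neq0.
Qed.

Lemma Qmono0 m : Qmono R (0 : 'rV[int]_m) = 1.
Proof. by rewrite /Qmono big1 // => i _; rewrite mxE expr0z. Qed.

Lemma Qmono_neq0 m (a : 'rV[int]_m) : Qmono R a != 0.
Proof.
rewrite /Qmono prodf_seq_neq0; apply/allP => i _ /=.
by rewrite expfz_neq0 // Qt_neq0.
Qed.

Lemma QconstM m (x y : R) : Qconst m (x * y) = Qconst m x * Qconst m y.
Proof. by rewrite /Qconst !rmorphM. Qed.
Lemma QconstD m (x y : R) : Qconst m (x + y) = Qconst m x + Qconst m y.
Proof. by rewrite /Qconst !rmorphD. Qed.
Lemma QconstN m (x : R) : Qconst m (- x) = - Qconst m x.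
Proof. by rewrite /Qconst !rmorphN. Qed.
Lemma Qconst1 m : Qconst m (1 : R) = 1.
Proof. by rewrite /Qconst !rmorph1. Qed.
Lemma Qconst0 m : Qconst m (0 : R) = 0.
Proof. by rewrite /Qconst !rmorph0. Qed.
Lemma Qconst_sum m (I : Type) (s : seq I) (F : I -> R) P :
  Qconst m (\sum_(x <- s | P x) F x) = \sum_(x <- s | P x) Qconst m (F x).
Proof. by rewrite /Qconst !rmorph_sum. Qed.


Variable n : nat.
Definition elist := seq ('rV[int]_n * R).

Definition evalL m (P : 'M[int]_(n, m)) (L : elist) : Qfield R m :=
  \sum_(p <- L) Qconst m p.2 * Qmono R (p.1 *m P).

Definition mulL (L1 L2 : elist) : elist :=
  map (fun pq : ('rV[int]_n * R) * ('rV[int]_n * R) =>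
         (pq.1.1 + pq.2.1, pq.1.2 * pq.2.2)) [seq (p, q) | p <- L1, q <- L2].
Definition negL (L : elist) : elist := [seq (p.1, - p.2) | p <- L].
Definition oneL : elist := [:: (0, 1)].
Definition prodL (ls : seq elist) : elist := foldr mulL oneL ls.
Definition entryL (f : laurent R n) : elist := [seq (a, f a) | a <- finsupp f].
Definition detL r (N : 'M[laurent R n]_r) : elist :=
  flatten [seq (if odd_perm s then negL else id)
     (prodL [seq entryL (N i (s i)) | i <- index_enum 'I_r])
           | s <- index_enum {perm 'I_r}].

Lemma evalL_cat m P L1 L2 : @evalL m P (L1 ++ L2) = evalL P L1 + evalL P L2.
Proof. by rewrite /evalL big_cat. Qed.

Lemma evalL_mul m P L1 L2 : @evalL m P (mulL L1 L2) = evalL P L1 * evalL P L2.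
Proof.
rewrite /evalL /mulL big_map big_allpairs mulr_suml; apply: eq_bigr => p _.
rewrite mulr_sumr; apply: eq_bigr => q _ /=.
rewrite QconstM mulmxDl QmonoD; ring.
Qed.

Lemma evalL_neg m P L : @evalL m P (negL L) = - evalL P L.
Proof.
rewrite /evalL /negL big_map -sumrN; apply: eq_bigr => p _ /=.
by rewrite QconstN mulNr.
Qed.

Lemma evalL_one m P : @evalL m P oneL = 1.
Proof. by rewrite /evalL big_seq1 /= Qconst1 mul0mx Qmono0 mulr1. Qed.

Lemma evalL_prod m P ls : @evalL m P (prodL ls) = \prod_(L <- ls) evalL P L.
Proof.
elim: ls => [|L ls IH]; first by rewrite big_nil evalL_one.
by rewrite big_cons /= evalL_mul IH.
Qed.

Lemma evalL_entry m P f : @evalL m P (entryL f) = push P f.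
Proof. by rewrite /evalL /entryL big_map. Qed.

Lemma evalL_flatten m P ls :
  @evalL m P (flatten ls) = \sum_(L <- ls) evalL P L.
Proof.
elim: ls => [|L ls IH]; first by rewrite big_nil /evalL big_nil.
by rewrite big_cons /= evalL_cat IH.
Qed.

Lemma evalL_det m P r (N : 'M[laurent R n]_r) :
  \det (map_mx (@push R n m P) N) = evalL P (detL N).
Proof.
rewrite /detL evalL_flatten big_map /determinant.
apply: eq_bigr => s _.
have -> : \prod_(i < r) (map_mx (push P) N) i (s i) =
          evalL P (prodL [seq entryL (N i (s i)) | i <- index_enum 'I_r]).
  rewrite evalL_prod big_map; apply: eq_bigr => i _.
  by rewrite mxE evalL_entry.
by case: (odd_perm s); rewrite ?evalL_neg /= ?expr1 ?expr0 ?mulN1r ?mul1r.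
Qed.


Lemma sum_pred1_uniq (U : eqType) (V : nmodType) (s : seq U) a (F : U -> V) :
  uniq s -> a \in s -> \sum_(u <- s | a == u) F u = F a.
Proof.
move=> us ais; rewrite -big_filter.
have -> : [seq u <- s | a == u] = [:: a].
  by rewrite -(filter_pred1_uniq us ais); apply: eq_filter => u; rewrite /= eq_sym.
by rewrite big_seq1.
Qed.

Lemma regroup (T U : eqType) (V : nmodType) (s : seq T) (g : T -> U) (F : T -> V) :
  \sum_(x <- s) F x = \sum_(u <- undup (map g s)) \sum_(x <- s | g x == u) F x.
Proof.
symmetry; transitivity (\sum_(u <- undup (map g s)) \sum_(x <- s)
    (if g x == u then F x else 0)).
  by apply: eq_bigr => u _; rewrite big_mkcond.
rewrite exchange_big /= [LHS]big_seq [RHS]big_seq; apply: eq_bigr => x xs.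
rewrite -big_mkcond /= sum_pred1_uniq ?undup_uniq //.
by rewrite mem_undup (map_f g xs).
Qed.

Definition vanish m (P : 'M[int]_(n, m)) (L : elist) :=
  forall u : 'rV[int]_m, \sum_(p <- L | p.1 *m P == u) p.2 = 0.

Lemma evalL_regroup m P L : @evalL m P L =
  \sum_(u <- undup (map (fun p => p.1 *m P) L))
     Qconst m (\sum_(p <- L | p.1 *m P == u) p.2) * Qmono R u.
Proof.
rewrite /evalL (regroup _ (fun p => p.1 *m P)); apply: eq_bigr => u _.
by rewrite Qconst_sum mulr_suml; apply: eq_bigr => p /eqP ->.
Qed.

Lemma vanish_evalL m P L : @vanish m P L -> evalL P L = 0.
Proof.
by move=> H; rewrite evalL_regroup big1 // => u _; rewrite H Qconst0 mul0r.
Qed.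

Definition mon m (w : 'rV[int]_m) : 'X_{1..m} := [multinom absz (w ord0 j) | j < m].

Lemma Qmono_nonneg m (w : 'rV[int]_m) : (forall j, 0 <= w 0 j) ->
  Qmono R w = tofrac ('X_[mon w]).
Proof.
move=> hw; rewrite /Qmono mpolyXE_id rmorph_prod; apply: eq_bigr => j _.
by rewrite /Qt -(gez0_abs (hw j)) -exprnP rmorphXn /mon mnmE.
Qed.

Lemma mon_inj m (w1 w2 : 'rV[int]_m) : (forall j, 0 <= w1 0 j) ->
  (forall j, 0 <= w2 0 j) -> (mon w1 == mon w2) = (w1 == w2).
Proof.
move=> h1 h2; apply/eqP/eqP => [e|-> //]; apply/matrixP => i j.
have := congr1 (fun M : 'X_{1..m} => M j) e; rewrite /mon !mnmE => e2.
by rewrite (ord1 i) -(gez0_abs (h1 j)) -(gez0_abs (h2 j)) e2.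
Qed.

Lemma indep m (U : seq 'rV[int]_m) (c : 'rV[int]_m -> R) : uniq U ->
  \sum_(u <- U) Qconst m (c u) * Qmono R u = 0 -> forall u, u \in U -> c u = 0.
Proof.
move=> Uuniq H u0 u0U.
pose gam : 'rV[int]_m := \row_j \sum_(u <- U) `|u 0 j|.
have pos : forall u, u \in U -> forall j, 0 <= (u + gam) 0 j.
  move=> u uU j; rewrite !mxE (bigD1_seq u) //=.
  have : 0 <= \sum_(i <- U | i != u) `|i 0 j| by apply: sumr_ge0.
  have : 0 <= u 0 j + `|u 0 j| by rewrite addrC -[X in _ + X]opprK subr_ge0 ler_normr lexx orbT.
  by move=> a b; rewrite addrA addr_ge0.
have H2 : \sum_(u <- U) (c u) *: ('X_[mon (u + gam)] : {mpoly R[m]}) = 0.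
  apply/eqP; rewrite -tofrac_eq0 rmorph_sum; apply/eqP.
  transitivity (\sum_(u <- U) Qconst m (c u) * Qmono R u * Qmono R gam);
    last by rewrite -mulr_suml H mul0r.
  rewrite big_seq_cond [RHS]big_seq_cond; apply: eq_bigr => u /andP[uU _].
  by rewrite -mulrA -QmonoD (Qmono_nonneg (pos u uU)) -mul_mpolyC rmorphM.
have := congr1 (mcoeff (mon (u0 + gam))) H2; rewrite mcoeff0 raddf_sum /=.
rewrite (bigD1_seq u0) //=  mcoeffZ mcoeffX eqxx mulr1 big_seq_cond big1 ?addr0 //.
move=> u /andP[uU ne]; rewrite mcoeffZ mcoeffX (mon_inj (pos u uU) (pos u0 u0U)).
by rewrite (inj_eq (addIr gam)) (negbTE ne) mulr0.
Qed.


Lemma evalL_eq0_vanish m P L : @evalL m P L = 0 -> vanish P L.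
Proof.
rewrite evalL_regroup => H u.
have [uin|unin] := boolP (u \in undup (map (fun p => p.1 *m P) L)).
  exact: (indep (undup_uniq _) H uin).
rewrite big1_seq // => p /andP[/eqP e pL]; case/negP: unin.
by rewrite mem_undup -e (map_f (fun p => p.1 *m P) pL).
Qed.

Lemma vanish_mono m0 m (P0 : 'M[int]_(n, m0)) (P : 'M[int]_(n, m)) L :
  (forall p q, p \in L -> q \in L -> p.1 *m P0 == q.1 *m P0 ->
     p.1 *m P == q.1 *m P) ->
  vanish P0 L -> vanish P L.
Proof.
move=> hc hv v; rewrite big_mkcond (regroup _ (fun p => p.1 *m P0)).
rewrite big1_seq //= => u; rewrite mem_undup => /mapP[p0 p0L e0].
have [hv0|hv0] := boolP (p0.1 *m P == v).
  rewrite -[RHS](hv u) [LHS]big_seq_cond [RHS]big_seq_cond.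
  apply: eq_bigr => p /andP[pL /eqP e].
  have := hc p p0 pL p0L; rewrite e e0 eqxx => /(_ isT) /eqP ->.
  by rewrite hv0.
rewrite big1_seq // => p /andP[/eqP e pL].
have := hc p p0 pL p0L; rewrite e e0 eqxx => /(_ isT) /eqP ->.
by rewrite (negbTE hv0).
Qed.

End PartA.

Section Ranks.
Variable F : fieldType.

Lemma rank_mxsub a b r r' (f : 'I_r -> 'I_a) (g : 'I_r' -> 'I_b) (A : 'M[F]_(a, b)) :
  (\rank (mxsub f g A) <= \rank A)%N.
Proof.
rewrite mxsubrc rowsubE; apply: leq_trans (mxrankM_maxr _ _) _.
have -> : colsub g A = A *m colsub g 1%:M by rewrite mulmx_colsub mulmx1.
exact: mxrankM_maxl.
Qed.

Lemma rank_lower a b r (f : 'I_r -> 'I_a) (g : 'I_r -> 'I_b) (A : 'M[F]_(a, b)) :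
  \det (mxsub f g A) != 0 -> (r <= \rank A)%N.
Proof.
move=> h; have u : mxsub f g A \in unitmx by rewrite unitmxE unitfE.
by rewrite -{1}(mxrank_unit u) rank_mxsub.
Qed.

Lemma free_colsub b r (B : 'M[F]_(r, b)) : row_free B ->
  exists g : {ffun 'I_r -> 'I_b}, colsub g B \in unitmx.
Proof.
move=> fB; have e : \rank B^T = r by rewrite mxrank_tr; apply/eqP.
move: (maxrankfun B^T) (maxrowsub_free B^T); rewrite e => h hf.
exists h; rewrite -row_free_unit.
have -> : colsub h B = (rowsub h B^T)^T by apply/matrixP => i j; rewrite !mxE.
by rewrite /row_free mxrank_tr; apply/eqP; move/eqP: hf.
Qed.

Lemma rank_witness a b (A : 'M[F]_(a, b)) :
  exists (f : {ffun 'I_(\rank A) -> 'I_a}) (g : {ffun 'I_(\rank A) -> 'I_b}),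
    \det (mxsub f g A) != 0.
Proof.
have [g hg] := free_colsub (maxrowsub_free A).
exists (maxrankfun A), g; rewrite mxsubcr.
by move: hg; rewrite unitmxE unitfE.
Qed.

Lemma hdim_formula a b e (A : 'M[F]_(a, b)) (B : 'M[F]_(e, a)) :
  B *m A = 0 -> hdim A B = ((a - \rank A) - \rank B)%N.
Proof.
move=> h; rewrite /hdim.
have := mxrank_cap_compl (kermx A) B.
have sB : (B <= kermx A)%MS by rewrite sub_kermx h.
rewrite (capmx_idPr sB) mxrank_ker => <-.
by rewrite addKn.
Qed.

End Ranks.

Section Complex.
Variable R : idomainType.
Variable n : nat.
Variable c : nat -> nat.
Variable d : forall i, 'M[laurent R n]_(c i.+1, c i).

Lemma vanish_id m (P : 'M[int]_(n, m)) (L : elist R n) :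
  (forall e, \sum_(p <- L | p.1 == e) p.2 = 0) -> evalL P L = 0.
Proof.
move=> H; apply: vanish_evalL; apply: (@vanish_mono _ _ _ _ (1%:M : 'M[int]_n)).
  by move=> p q _ _; rewrite !mulmx1 => /eqP ->.
move=> u; rewrite -[RHS](H u); apply: eq_bigl => p; by rewrite mulmx1.
Qed.

Lemma push_complex (hcx : is_chain_complex d) i m (P : 'M[int]_(n, m)) :
  map_mx (push P) (d i.+1) *m map_mx (push P) (d i) = 0.
Proof.
apply/matrixP => x z; rewrite !mxE.
transitivity (evalL P (flatten [seq mulL (entryL (d i.+1 x j)) (entryL (d i j z))
                                | j <- index_enum 'I_(c i.+1)])).
  rewrite evalL_flatten big_map; apply: eq_bigr => j _.
  by rewrite !mxE evalL_mul !evalL_entry.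
apply: vanish_id => e; rewrite big_flatten big_map /= -[RHS](hcx i x z e).
apply: eq_bigr => j _.
rewrite /mulL big_map /= big_mkcond big_allpairs /entryL big_map.
apply: eq_bigr => a _; rewrite big_map [RHS]big_mkcond; apply: eq_bigr => b _.
by [].
Qed.

Definition rk m (P : 'M[int]_(n, m)) i := \rank (map_mx (push P) (d i)).
Definition rkpre m (P : 'M[int]_(n, m)) k :=
  match k with 0 => 0%N | k'.+1 => rk P k' end.

Lemma betti_eq (hcx : is_chain_complex d) k m (P : 'M[int]_(n, m)) :
  betti_p d k P = ((c k - rkpre P k) - rk P k)%N.
Proof.
case: k => [|k] /=.
  by rewrite hdim_formula ?mulmx0 // mxrank0.
by rewrite hdim_formula // (push_complex hcx).
Qed.

Definition Wd i : seq 'rV[int]_n :=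
  flatten [seq flatten [seq flatten [seq [seq p.1 | p <- detL (mxsub f g (d i))]
     | g : {ffun 'I_r -> 'I_(c i)} <- index_enum {ffun 'I_r -> 'I_(c i)}]
     | f : {ffun 'I_r -> 'I_(c i.+1)} <- index_enum {ffun 'I_r -> 'I_(c i.+1)}]
     | r <- iota 0 (c i.+1).+1].

Definition coarse (W : seq 'rV[int]_n) m0 m (P0 : 'M[int]_(n, m0))
  (P : 'M[int]_(n, m)) :=
  forall u v, u \in W -> v \in W -> u *m P0 == v *m P0 -> u *m P == v *m P.

Lemma rk_mono i m0 m (P0 : 'M[int]_(n, m0)) (P : 'M[int]_(n, m)) :
  coarse (Wd i) P0 P -> (rk P i <= rk P0 i)%N.
Proof.
move=> hc; rewrite /rk.
have [f [g h]] := rank_witness (map_mx (push P) (d i)).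
apply: (rank_lower (f := f) (g := g)).
move: h; rewrite -!map_mxsub !evalL_det => h; apply/eqP => h0.
move/eqP: h; apply; apply: vanish_evalL.
apply: (vanish_mono _ (evalL_eq0_vanish h0)) => p q pL qL.
have memW : forall p, p \in detL (mxsub f g (d i)) -> p.1 \in Wd i.
  move=> p0 p0L; apply/flatten_mapP; exists (\rank (map_mx (push P) (d i))).
    by rewrite mem_iota add0n ltnS rank_leq_row.
  apply/flatten_mapP; exists f; first exact: mem_index_enum.
  apply/flatten_mapP; exists g; first exact: mem_index_enum.
  exact: map_f.
exact: hc (memW _ pL) (memW _ qL).
Qed.

Definition Wk k : seq 'rV[int]_n :=
  match k with 0 => Wd 0 | k'.+1 => Wd k' ++ Wd k'.+1 end.

Lemma coarse_sub (W1 W2 : seq 'rV[int]_n) m0 m (P0 : 'M[int]_(n, m0))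
  (P : 'M[int]_(n, m)) : {subset W1 <= W2} -> coarse W2 P0 P -> coarse W1 P0 P.
Proof. by move=> s h u v uW vW; apply: h; apply: s. Qed.

Lemma betti_mono (hcx : is_chain_complex d) k m0 m (P0 : 'M[int]_(n, m0))
  (P : 'M[int]_(n, m)) : coarse (Wk k) P0 P ->
  (betti_p d k P0 <= betti_p d k P)%N.
Proof.
move=> hc; rewrite !betti_eq //.
case: k hc => [|k] /= hc.
  by apply: leq_sub2l; apply: rk_mono.
apply: leq_sub; last by apply: rk_mono; apply: coarse_sub hc => u uW;
  rewrite mem_cat uW orbT.
apply: leq_sub2l; apply: rk_mono; apply: coarse_sub hc => u uW.
by rewrite mem_cat uW.
Qed.

End Complex.
Section Full.
Variable n : nat.

Definition kerP (vs : seq 'rV[int]_n) (phi : 'cV[int]_n) : Prop :=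
  forall v, v \in vs -> v *m phi = 0.

Lemma kerP_mx (vs : seq 'rV[int]_n) phi :
  kerP vs phi <-> (\matrix_(i < size vs, j < n) (nth 0 vs i) 0 j) *m phi = 0.
Proof.
have E : forall i : 'I_(size vs), ((\matrix_(i < size vs, j < n) (nth 0 vs i) 0 j) *m phi) i 0
          = (nth 0 vs i *m phi) 0 0.
  by move=> i; rewrite !mxE; apply: eq_bigr => j _; rewrite mxE.
split.
  move=> h; apply/matrixP => i k; rewrite (ord1 k) E h ?mxE //.
  exact: mem_nth.
move=> h v vin; apply/matrixP => i k; rewrite (ord1 i) (ord1 k).
have := E (Ordinal (etrans (index_mem v vs) vin)); rewrite h /= nth_index //.
by move=> <-; rewrite !mxE.
Qed.

Lemma full_ker (vs : seq 'rV[int]_n) : is_full (kerP vs).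
Proof.
set V := \matrix_(i < size vs, j < n) (nth 0 vs i) 0 j.
have [L hL [Rm hR [dd _ hV]]] := int_Smith_normal_form V.
set D := \matrix_(i, j) (dd`_i *+ (i == j :> nat)) : 'M[int]_(size vs, n) in hV.
pose Z (j : 'I_n) := (j < size vs)%N && (dd`_j != 0).
pose K (psi : 'cV[int]_n) := forall j, Z j -> psi j 0 = 0.
have F3 : forall psi, D *m psi = 0 <-> K psi.
  move=> psi; split.
    move=> h j /andP[ja nz]; have := congr1 (fun M : 'cV[int]_(size vs) => M (Ordinal ja) 0) h.
    rewrite !mxE (bigD1 j) //= big1 ?addr0.
      by rewrite /D mxE /= eqxx mulr1n => /eqP; rewrite mulf_eq0 (negbTE nz) => /eqP.
    move=> k nk; rewrite /D mxE; case: eqP => [e|_]; last by rewrite mulr0n mul0r.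
    by case/eqP: nk; apply: val_inj; rewrite /= -e.
  move=> h; apply/matrixP => i k; rewrite (ord1 k) !mxE big1 // => j _; rewrite /D mxE.
  case: eqP => [e|]; last by rewrite mulr0n mul0r.
  have [z|nz] := eqVneq (dd`_i) 0; first by rewrite z mul0r.
  rewrite h ?mulr0 //; apply/andP; split; first by rewrite -e ltn_ord.
  by rewrite -e.
have F2 : forall phi, kerP vs phi <-> K (Rm *m phi).
  move=> phi; rewrite kerP_mx -/V -F3 hV -!mulmxA; split => h.
    by rewrite -(mulKmx hL (D *m (Rm *m phi))) h mulmx0.
  by rewrite h mulmx0.
have RK : forall X : 'cV[int]_n, Rm *m (invmx Rm *m X) = X.
  by move=> X; rewrite mulmxA mulmxV // mul1mx.
split.
  split; first by move=> v _; rewrite mulmx0.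
  by move=> x y hx hy v vin; rewrite mulmxBr hx // hy // subr0.
exists (fun phi => forall j, ~~ Z j -> (Rm *m phi) j 0 = 0).
split.
  split; first by move=> j _; rewrite mulmx0 mxE.
  move=> x y hx hy j zj; move: (hx j zj) (hy j zj).
  by rewrite mulmxBr !mxE => -> ->; rewrite subr0.
split.
  move=> x /F2 hx hz; rewrite -(mulKmx hR x).
  have -> : Rm *m x = 0.
    apply/matrixP => j k; rewrite (ord1 k) [in RHS]mxE.
    by case zj: (Z j); [apply: hx; rewrite zj | apply: hz; rewrite zj].
  by rewrite mulmx0.
move=> x; set psi := Rm *m x.
pose psi1 : 'cV[int]_n := \col_j (if Z j then psi j 0 else 0).
exists (invmx Rm *m (psi - psi1)), (invmx Rm *m psi1).
split; first by apply/F2; rewrite RK => j zj; rewrite !mxE zj subrr.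
split; first by move=> j zj; rewrite RK mxE (negbTE zj).
by rewrite -mulmxDr subrK mulKmx.
Qed.

Lemma proper_ker (vs : seq 'rV[int]_n) v : v \in vs -> v != 0 ->
  is_proper (kerP vs).
Proof.
move=> vin nz; exists v^T => h; move: nz; have := h v vin.
move/(congr1 (fun M : 'M[int]_1 => M 0 0)); rewrite !mxE => s0.
have H0 : forall j : 'I_n, v 0 j * v^T j 0 = 0.
  move=> j; apply: (@psumr_eq0P _ _ predT (fun j => v 0 j * v^T j 0)) => //.
  by move=> i _; rewrite mxE -expr2 sqr_ge0.
apply/negP; rewrite negbK; apply/eqP/matrixP => i j; rewrite (ord1 i) mxE.
by move/eqP: (H0 j); rewrite mxE mulf_eq0 orbb => /eqP.
Qed.

End Full.

Lemma enum_family (n : nat) (X : finType) (good : X -> Prop)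
  (Gf : X -> ('cV[int]_n -> Prop)) :
  exists (N : nat) (G : 'I_N -> ('cV[int]_n -> Prop)),
    (forall i, exists x, good x /\ G i = Gf x) /\
    (forall x, good x -> exists i, G i = Gf x).
Proof.
suff : forall s : seq X, exists (N : nat) (G : 'I_N -> ('cV[int]_n -> Prop)),
    (forall i, exists x, good x /\ G i = Gf x) /\
    (forall x, x \in s -> good x -> exists i, G i = Gf x).
  case/(_ (enum X)) => N [G [h1 h2]]; exists N, G; split => // x gx.
  by apply: h2 => //; rewrite mem_enum.
elim => [|x s [N [G [h1 h2]]]].
  by exists 0%N, (fun _ _ => True); split => // [[]].
case: (classic (good x)) => gx.
  exists N.+1, (fun i => if unlift ord0 i is Some j then G j else Gf x).
  split.
    move=> i; case: (unlift ord0 i) => [j|]; first exact: h1.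
    by exists x.
  move=> y; rewrite in_cons => /orP[/eqP ->|ys] gy.
    by exists ord0; rewrite unlift_none.
  by have [j hj] := h2 y ys gy; exists (lift ord0 j); rewrite liftK.
exists N, G; split => // y; rewrite in_cons => /orP[/eqP ->|ys] gy.
  by case: gx.
exact: h2.
Qed.

Section Main.
Variable R : idomainType.
Variable n : nat.
Variable c : nat -> nat.
Variable d : forall i, 'M[laurent R n]_(c i.+1, c i).
Variable k : nat.

Let W := Wk d k.
Let s := size W.
Let wi (i : 'I_s) := nth 0 W i.

Definition relP m (P : 'M[int]_(n, m)) : {set 'I_s * 'I_s} :=
  [set ij | wi ij.1 *m P == wi ij.2 *m P].

Definition vsOf (rho : {set 'I_s * 'I_s}) : seq 'rV[int]_n :=
  [seq wi ij.1 - wi ij.2 | ij <- enum rho].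

Lemma sq_kerP m (P : 'M[int]_(n, m)) rho :
  sqsub P (kerP (vsOf rho)) <->
  (forall ij, ij \in rho -> wi ij.1 *m P = wi ij.2 *m P).
Proof.
have E : forall v : 'rV[int]_n, (forall j, v *m col j P = 0) <-> v *m P = 0.
  move=> v; split.
    move=> h; apply/matrixP => i j; rewrite (ord1 i).
    have := congr1 (fun M : 'M[int]_1 => M 0 0) (h j).
    rewrite !mxE => H; apply: etrans H; apply: eq_bigr => l _.
    by rewrite /col mxE.
  move=> h j; apply/matrixP => i i2; rewrite (ord1 i) (ord1 i2).
  have := congr1 (fun M : 'rV[int]_m => M 0 j) h.
  rewrite !mxE => H; apply: etrans H; apply: eq_bigr => l _.
  by rewrite /col mxE.
split.
  move=> h ij ijr; apply/eqP; rewrite -subr_eq0 -mulmxBl; apply/eqP.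
  apply/E => j; apply: h; apply/mapP; exists ij => //.
  by rewrite mem_enum.
move=> h j v /mapP[ij]; rewrite mem_enum => ijr ->.
by apply: (E _).2; rewrite mulmxBl h // subrr.
Qed.

Lemma sq_coarse m0 m (P0 : 'M[int]_(n, m0)) (P : 'M[int]_(n, m)) :
  sqsub P (kerP (vsOf (relP P0))) -> coarse W P0 P.
Proof.
move/sq_kerP => h u v uW vW e.
pose iu : 'I_s := Ordinal (etrans (index_mem u W) uW).
pose iv : 'I_s := Ordinal (etrans (index_mem v W) vW).
have := h (iu, iv); rewrite inE /wi /= !nth_index // e => /(_ isT) ->.
by [].
Qed.

Lemma main_aux (hcx : is_chain_complex d) (q : nat) (hq : (0 < q)%N) :
  exists (N : nat) (G : 'I_N -> ('cV[int]_n -> Prop)),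
    (forall i, is_full (G i) /\ is_proper (G i)) /\
    forall (m : nat) (P : 'M[int]_(n, m)),
      (betti d k + q <= betti_p d k P)%N <-> exists i, sqsub P (G i).
Proof.
have [N [G [h1 h2]]] := enum_family
  (fun rho => exists m0 (P0 : 'M[int]_(n, m0)), rho = relP P0 /\
                (betti d k + q <= betti_p d k P0)%N)
  (fun rho => kerP (vsOf rho)).
exists N, G; split.
  move=> i; have [x [[m0 [P0 [-> hP0]]] ->]] := h1 i.
  split; first exact: full_ker.
  case: (classic (exists v, v \in vsOf (relP P0) /\ v != 0)) =>
    [[v [vin nz]]|nov]; first exact: proper_ker vin nz.
  exfalso.
  have hc : coarse W P0 (1%:M : 'M[int]_n).
    move=> u v uW vW e; rewrite !mulmx1.
    pose iu : 'I_s := Ordinal (etrans (index_mem u W) uW).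
    pose iv : 'I_s := Ordinal (etrans (index_mem v W) vW).
    have vin : wi iu - wi iv \in vsOf (relP P0).
      apply/mapP; exists (iu, iv) => //.
      by rewrite mem_enum inE /wi /= !nth_index // e.
    have : wi iu - wi iv = 0.
      apply/eqP; apply/negPn/negP => nz; apply: nov.
      by exists (wi iu - wi iv); split.
    by move/eqP; rewrite subr_eq0 /wi /= !nth_index.
  have := @betti_mono R n c d hcx k _ _ P0 (1%:M : 'M[int]_n) hc.
  rewrite -/(betti d k) => hb.
  have := leq_trans hP0 hb; rewrite -{2}(addn0 (betti d k)) leq_add2l.
  by rewrite leqn0 => /eqP q0; rewrite q0 in hq.
move=> m P; split.
  move=> hP; have [i hi] := h2 (relP P) (ex_intro _ m (ex_intro _ P (conj erefl hP))).
  exists i; rewrite hi; apply/sq_kerP => ij; rewrite inE => /eqP.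
  by [].
case=> i; have [x [[m0 [P0 [-> hP0]]] ->]] := h1 i => /sq_coarse hc.
exact: leq_trans hP0 (@betti_mono R n c d hcx k _ _ P0 P hc).
Qed.

End Main.

Theorem theorem7p3 (R : idomainType) (n : nat) (c : nat -> nat)
  (d : forall i, 'M[laurent R n]_(c i.+1, c i))
  (hfin : finite_complex c) (hcx : is_chain_complex d)
  (k q : nat) (hq : (0 < q)%N) :
  exists (N : nat) (G : 'I_N -> ('cV[int]_n -> Prop)),
    (forall i, is_full (G i) /\ is_proper (G i)) /\
    forall (m : nat) (P : 'M[int]_(n, m)),
      (betti d k + q <= betti_p d k P)%N <-> exists i, sqsub P (G i).
Proof. exact: (main_aux k hcx hq). Qed.
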